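(* Let $X$ be a rank-one subshift, associated to a rank-one transformation on a finite measure space, with cut sequence $(r_n)$ and spacer sequence $(s_{n,i})$ such that $s_{n,r_n}=0$ for all sufficiently large $n$. If for infinitely many $n$ the set $\{s_{m,i}: m\ge n,\ 0\le i<r_m\}$ contains at least three distinct values, then $\limsup_{q\to\infty} p(q)/q\ge 2$.
   Context: Rank-one transformations: given a cut sequence $(r_n)_{n\ge1}$ of positive integers and a spacer sequence $(s_{n,i})_{n\ge1,0\le i\le r_n}$ of nonnegative integers, the rank-one transformation is built by cutting and stacking ($C_1=[0,1)$; $C_{n+1}$ obtained by cutting $C_n$ into $r_n+1$ equal-width subcolumns, adding $s_{n,i}$ spacers atop subcolumn $i$, stacking left to right); the space has finite measure iff $\sum_n\frac{1}{r_nh_n}\sum_i s_{n,i}<\infty$. The associated subshift is given by $B_1=0$, $B_{n+1}=B_n1^{s_{n,0}}\cdots B_n1^{s_{n,r_n}}$ ($h_n=$ length of $B_n$): all $x\in\{0,1\}^{\mathbb Z}$ whose finite subwords are subwords of some $B_n$; $p(q)$ is the number of distinct words of length $q$ occurring in it. *)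

(* Defs.v *)
From HB Require Import structures.
From mathcomp Require Import all_boot all_order all_algebra.
From mathcomp Require Import all_classical all_reals all_analysis.
Set Implicit Arguments. Unset Strict Implicit. Unset Printing Implicit Defensive.
Import Order.TTheory GRing.Theory Num.Theory numFieldNormedType.Exports.

(* Indexing convention: the paper's sequences are indexed by n >= 1;
   here [r n] and [s n i] are the paper's r_n and s_{n,i} (values at n = 0
   are irrelevant).  [Bword r s k] is the paper's B_{k+1}; alphabet {0,1}
   is bool with 0 = false and 1 = true. *)
Fixpoint Bword (r : nat -> nat) (s : nat -> nat -> nat) (k : nat) : seq bool :=
  match k with
  | 0 => [:: false]
  | k'.+1 => flatten [seq Bword r s k' ++ nseq (s k'.+1 i) true
                     | i <- iota 0 (r k'.+1).+1]
  end.

Definition height (r : nat -> nat) (s : nat -> nat -> nat) (n : nat) : nat :=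
  size (Bword r s n.-1).

Definition spacers (r : nat -> nat) (s : nat -> nat -> nat) (n : nat) : nat :=
  \sum_(0 <= i < (r n).+1) s n i.

Definition finite_measure (R : realType) (r : nat -> nat) (s : nat -> nat -> nat) : Prop :=
  let u : R^nat := fun k : nat =>
     ((spacers r s k.+1)%:R / ((r k.+1)%:R * (height r s k.+1)%:R))%R in
  cvgn (series u).

Definition window (x : int -> bool) (i : int) (len : nat) : seq bool :=
  [seq x (i + k%:Z)%R | k <- iota 0 len].

Definition rank_one_subshift (r : nat -> nat) (s : nat -> nat -> nat) : set (int -> bool) :=
  [set x | forall (i : int) (len : nat), exists n, infix (window x i len) (Bword r s n)].

Definition occurs_in (X : set (int -> bool)) (w : seq bool) : Prop :=
  exists x, X x /\ exists i : int, window x i (size w) = w.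

Definition complexity (r : nat -> nat) (s : nat -> nat -> nat) (q : nat) : nat :=
  #|[set w : q.-tuple bool | `[< occurs_in (rank_one_subshift r s) (tval w) >]]|.

(* Main.v *)
Require Import Defs.
From HB Require Import structures.
From mathcomp Require Import all_boot all_order all_algebra.
From mathcomp Require Import all_classical all_reals all_analysis.
From mathcomp Require Import zify ring lra.
Import Order.TTheory GRing.Theory Num.Theory numFieldNormedType.Exports.
Set Implicit Arguments. Unset Strict Implicit. Unset Printing Implicit Defensive.
Section Words.
Variables (r : nat -> nat) (s : nat -> nat -> nat).
Local Notation W := (Bword r s).

Lemma flatten_pair (f : nat -> seq bool) n i : i < n ->
  infix (f i ++ f i.+1) (flatten [seq f j | j <- iota 0 n.+1]).
Proof.
move=> lt_in.
have -> : iota 0 n.+1 = iota 0 i ++ [:: i, i.+1 & iota i.+2 (n - i.+1)].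
  have -> : n.+1 = i + (n - i.+1).+2 by lia.
  by rewrite iotaD /= add0n.
rewrite map_cat flatten_cat /= catA.
by apply/infixP; exists (flatten [seq f j | j <- iota 0 i]), (flatten [seq f j | j <- iota i.+2 (n - i.+1)]); rewrite !catA.
Qed.

Lemma WS k : W k.+1 = flatten [seq W k ++ nseq (s k.+1 i) true | i <- iota 0 (r k.+1).+1].
Proof. by []. Qed.

Lemma W_pair k i : i < r k.+1 ->
  infix (W k ++ nseq (s k.+1 i) true ++ W k) (W k.+1).
Proof.
move=> lt; apply: infix_trans (flatten_pair (fun j => W k ++ nseq (s k.+1 j) true) lt).
by apply/infixP; exists [::], (nseq (s k.+1 i.+1) true); rewrite /= -!catA.
Qed.

Lemma W_prefix1 k : exists S, W k.+1 = W k ++ S.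
Proof.
rewrite WS /=; eexists; by rewrite -catA.
Qed.

Lemma W_suffix1 k : s k.+1 (r k.+1) = 0 -> exists P, W k.+1 = P ++ W k.
Proof.
move=> e; rewrite WS.
have -> : iota 0 (r k.+1).+1 = iota 0 (r k.+1) ++ [:: r k.+1] by rewrite -addn1 iotaD.
rewrite map_cat flatten_cat /= e.
exists (flatten [seq W k ++ nseq (s k.+1 i) true | i <- iota 0 (r k.+1)]); by rewrite !cats0.
Qed.

Lemma W_head k : exists t, W k = false :: t.
Proof.
elim: k => [|k [t Ht]]; first by exists [::].
have [S ->] := W_prefix1 k; rewrite Ht; by eexists.
Qed.

Lemma W_prefix k m : k <= m -> exists S, W m = W k ++ S.
Proof.
move=> /subnK <-; elim: (m - k) => [|d [S HS]]; first by exists [::]; rewrite cats0.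
rewrite addSn; have [S' ->] := W_prefix1 (d + k); rewrite HS -catA; by eexists.
Qed.

Lemma W_suffix N k m : (forall n, N <= n -> s n (r n) = 0) -> N <= k -> k <= m ->
  exists P, W m = P ++ W k.
Proof.
move=> hs Nk /subnK <-; elim: (m - k) => [|d [P HP]]; first by exists [::].
have h1 : s (d+k).+1 (r (d+k).+1) = 0 by apply: hs; lia.
rewrite addSn; have [P' ->] := W_suffix1 h1.
rewrite HP catA; by eexists.
Qed.

Lemma W_size (hr : forall n, 1 <= n -> 0 < r n) k : k < size (W k).
Proof.
elim: k => [|k IH] //.
have := flatten_pair (fun j => W k ++ nseq (s k.+1 j) true) (hr k.+1 isT).
move=> /infixP [a [b E]]; rewrite WS E !size_cat !size_nseq; lia.
Qed.

Lemma rcons_nseq (x : bool) J : rcons (nseq J x) x = nseq J.+1 x.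
Proof. by elim: J => //= J ->. Qed.

Lemma trail_form (w : seq bool) : (exists t, w = false :: t) ->
  exists V J, w = V ++ false :: nseq J true.
Proof.
elim/last_ind: w => [[t //]|w x IH] [t Ht].
case: x Ht => Ht; last by exists w, 0; rewrite -cats1.
have [|V [J E]] := IH.
  by case: w Ht {IH} => [|y w] //= [<- _]; eexists.
by exists V, J.+1; rewrite E rcons_cat /= rcons_nseq.
Qed.

End Words.


Section Count.
Variable X : set (int -> bool).

Definition cplx q := #|[set w : q.-tuple bool | `[< occurs_in X (tval w) >]]|.
Definition RSw (w : seq bool) := occurs_in X (rcons w false) /\ occurs_in X (rcons w true).

Lemma size_window x i n : size (window x i n) = n.
Proof. by rewrite /window size_map size_iota. Qed.

Lemma window_rcons x i n : window x i n.+1 = rcons (window x i n) (x (i + n%:Z)%R).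
Proof.
rewrite /window.
have -> : iota 0 n.+1 = rcons (iota 0 n) n by rewrite -cats1 -addn1 iotaD.
by rewrite map_rcons.
Qed.

Lemma occ_ext w : occurs_in X w -> occurs_in X (rcons w false) \/ occurs_in X (rcons w true).
Proof.
move=> [x [Xx [i E]]].
case Hx: (x (i + (size w)%:Z)%R); [right|left]; exists x; split => //; exists i;
  by rewrite size_rcons window_rcons E Hx.
Qed.

Lemma cplx_step q (w1 w2 : seq bool) (H1 : size w1 == q) (H2 : size w2 == q) :
  w1 != w2 -> RSw w1 -> RSw w2 -> (cplx q + 2 <= cplx q.+1)%N.
Proof.
move=> neq [a1 b1] [a2 b2].
pose S (e : bool) := [set w : q.-tuple bool | `[< occurs_in X (rcons w e) >]].
pose L := [set w : q.-tuple bool | `[< occurs_in X (tval w) >]].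
pose L1 := [set w : q.+1.-tuple bool | `[< occurs_in X (tval w) >]].
pose f (e : bool) (w : q.-tuple bool) := [tuple of rcons w e].
have finj e : injective (f e).
  move=> u v /(congr1 val) /= /eqP; rewrite eqseq_rcons eqxx andbT => /eqP h; exact: val_inj.
have imsub e : f e @: S e \subset L1.
  apply/fintype.subsetP => t /imsetP [w Hw ->]; move: Hw; rewrite !inE => /asboolP h; exact/asboolP.
have disj : (f false @: S false) :&: (f true @: S true) = finset.set0.
  apply/finset.setP => t; rewrite !inE; apply/negP => /andP [/imsetP [u _ ->] /imsetP [v _]].
  by move=> /(congr1 val) /= /(congr1 (last false)); rewrite !last_rcons.
have LS : L \subset S false :|: S true.
  apply/fintype.subsetP => w; rewrite !inE => /asboolP h.
  by case: (occ_ext (asboolW h)) => h'; apply/orP; [left|right]; apply/asboolP.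
pose t1 := Tuple H1; pose t2 := Tuple H2.
have T2 : [set t1; t2] \subset S false :&: S true.
  apply/fintype.subsetP => t; rewrite !inE => /orP [] /eqP -> ; apply/andP; split; apply/asboolP.
  exact: a1. exact: b1. exact: a2. exact: b2.
have ne : t1 != t2 by apply: contra neq => /eqP /(congr1 val) /= ->.
have c2 : #|[set t1; t2]| = 2 by rewrite cards2 ne.
have := cardsUI (S false) (S true).
have := cardsUI (f false @: S false) (f true @: S true).
rewrite disj cards0 addn0 !card_imset //.
have := subset_leq_card LS; have := subset_leq_card T2; rewrite c2.
have : #|f false @: S false :|: f true @: S true| <= #|L1|.
  by apply: subset_leq_card; rewrite finset.subUset !imsub.
rewrite /cplx -/L -/L1. lia.
Qed.

End Count.

Lemma cplx_range X lo Q :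
  (forall q, (lo <= q < Q)%N -> exists w1 w2 : seq bool, [/\ size w1 == q, size w2 == q, w1 != w2,
      RSw X w1 & RSw X w2]) ->
  (2 * (Q - lo) <= cplx X Q)%N.
Proof.
elim: Q => [|Q IH] h; first by rewrite sub0n.
case: (ltnP Q lo) => hQ; first by rewrite (_ : Q.+1 - lo = 0)%N //; lia.
have := IH (fun q hq => h q (ltac:(lia))).
have [w1 [w2 [s1 s2 ne R1 R2]]] := h Q (ltac:(lia)).
have := cplx_step s1 s2 ne R1 R2. lia.
Qed.


Lemma map_nth_iota (s : seq bool) j len : (j + len <= size s)%N ->
  [seq nth false s (j + k) | k <- iota 0 len] = take len (drop j s).
Proof.
move=> h.
have sz : size (take len (drop j s)) = len by rewrite size_takel // size_drop; lia.
rewrite -[RHS](mkseq_nth false) sz /mkseq; apply/eq_in_map => k; rewrite mem_iota => /andP [_ hk].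
by rewrite nth_take // nth_drop.
Qed.

Lemma infix_take_drop (s : seq bool) j len : infix (take len (drop j s)) s.
Proof.
apply/infixP; exists (take j s), (drop len (drop j s)).
by rewrite !cat_take_drop.
Qed.

Section Point.
Variables (r : nat -> nat) (s : nat -> nat -> nat).
Hypothesis hr : forall n, (1 <= n)%N -> (0 < r n)%N.
Local Notation W := (Bword r s).
Local Notation c m := (size (W m)).

Variables (D : nat -> seq bool) (N0 : nat).
Hypothesis Dstep : forall m, (N0 <= m)%N -> exists P S, D m.+1 = P ++ D m ++ S /\ size P = (c m.+1 - c m)%N.
Hypothesis Dlegal : forall m, (N0 <= m)%N -> exists L, infix (D m) (W L).
Hypothesis Dpre : forall m, exists T, D m = W m ++ T.
Hypothesis Dsize : forall m, (c m + m < size (D m))%N.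

Lemma c_mono m m' : (m <= m')%N -> (c m <= c m')%N.
Proof.
move=> h; have [S ->] := W_prefix r s h; rewrite size_cat; lia.
Qed.

Lemma Dtrans m m' : (N0 <= m)%N -> (m <= m')%N ->
  exists P S, D m' = P ++ D m ++ S /\ size P = (c m' - c m)%N.
Proof.
move=> h0 /subnK <-; elim: (m' - m)%N => [|d [P [S [E sP]]]].
  by exists [::], [::]; rewrite cats0 subnn.
have [P' [S' [E' sP']]] := Dstep (ltac:(lia) : (N0 <= d + m)%N).
exists (P' ++ P), (S ++ S'); rewrite addSn E' E !catA; split => //.
rewrite size_cat sP sP'; have := c_mono (leq_addl d m); have := c_mono (leqnSn (d + m)); lia.
Qed.

Definition xpt (i : int) : bool :=
  nth false (D (N0 + absz i)%N) (absz ((c (N0 + absz i)%N)%:Z + i)%R).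

Lemma nth_Dtrans m m' j : (N0 <= m)%N -> (m <= m')%N -> (j < size (D m))%N ->
  nth false (D m') (c m' - c m + j)%N = nth false (D m) j.
Proof.
move=> h0 h1 hj; have [P [S [E sP]]] := Dtrans h0 h1.
by rewrite E -sP nth_cat ltnNge leq_addr /= addKn nth_cat hj.
Qed.

Lemma xptE m i : (N0 <= m)%N -> (0 <= (c m)%:Z + i)%R -> ((c m)%:Z + i < (size (D m))%:Z)%R ->
  xpt i = nth false (D m) (absz ((c m)%:Z + i)%R).
Proof.
move=> h0 hi1 hi2; rewrite /xpt.
set m0 := (N0 + absz i)%N.
have hm0 : (absz i < c m0)%N.
  have := @W_size r s hr m0; rewrite /m0; lia.
have hsz0 := Dsize m0.
set m1 := maxn m m0.
have hm1 : (m <= m1)%N by rewrite leq_maxl.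
have hm01 : (m0 <= m1)%N by rewrite leq_maxr.
rewrite -(nth_Dtrans (m' := m1) _ hm01); last first.
- have := Dsize m0; rewrite /m0 in hm0 *; lia.
- rewrite /m0; lia.
rewrite -(nth_Dtrans (m' := m1) h0 hm1); last by lia.
congr nth; have := c_mono hm1; have := c_mono hm01; lia.
Qed.

Lemma xpt_window m i len : (N0 <= m)%N -> (0 <= (c m)%:Z + i)%R ->
  (absz ((c m)%:Z + i)%R + len <= size (D m))%N ->
  window xpt i len = take len (drop (absz ((c m)%:Z + i)%R) (D m)).
Proof.
move=> h0 h1 h2; rewrite /window -map_nth_iota //; apply/eq_in_map => k.
rewrite mem_iota => /andP [_ hk].
rewrite (@xptE m) //; first (congr nth; lia); lia.
Qed.

Lemma xpt_in : rank_one_subshift r s xpt.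
Proof.
move=> i len; set m := (N0 + absz i + len)%N.
have h1 := @W_size r s hr m; have h2 := Dsize m.
have [L HL] := Dlegal (ltac:(lia) : (N0 <= m)%N).
exists L; rewrite (@xpt_window m) //; try lia.
exact: infix_trans (infix_take_drop _ _ _) HL.
Qed.

Lemma xpt_occ m w : (N0 <= m)%N -> infix w (W m) -> exists i, window xpt i (size w) = w.
Proof.
move=> h0 /infixP [a [b E]].
have [T ET] := Dpre m.
have hc : c m = (size a + size w + size b)%N.
  by rewrite E !size_cat addnA.
have hD : size (D m) = (c m + size T)%N by rewrite ET size_cat.
exists ((size a)%:Z - (c m)%:Z)%R.
rewrite (@xpt_window m) //; try lia.
have -> : absz ((c m)%:Z + ((size a)%:Z - (c m)%:Z))%R = size a by lia.
by rewrite ET E -!catA drop_size_cat // take_size_cat.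
Qed.

End Point.


Lemma limsup_ge2 (R : realType) (p : nat -> nat) :
  (forall e : R, (0 < e)%R -> (e < 1)%R -> forall K, exists Q, (K <= Q)%N /\ ((2 - e) * Q%:R <= (p Q)%:R)%R) ->
  ((2%:R : R)%:E <= limn_esup (fun q : nat => ((p q)%:R / q%:R : R)%:E))%E.
Proof.
move=> h; rewrite limn_esup_lim.
set u := (fun q : nat => ((p q)%:R / q%:R : R)%:E).
have key : forall e : R, (0 < e)%R -> (e < 1)%R -> ((2 - e)%:E <= limn (esups u))%E.
  move=> e e0 e1; apply: lime_ge; first exact: is_cvg_esups.
  apply: nearW => n.
  have [Q [hQ hb]] := h e e0 e1 (n.+1).
  apply: (@le_trans _ _ (u Q)); last first.
    by apply: ereal_sup_ubound; exists Q => //=; apply: ltnW.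
  rewrite /u lee_fin ler_pdivlMr; last by rewrite ltr0n; lia.
  by [].
move: key; case: (limn (esups u)) => [y| |] key.
- rewrite lee_fin; apply/negPn/negP; rewrite -ltNge => hy.
  have [y1|y1] := lerP y 1.
    have := key (1/2)%R ltac:(lra) ltac:(lra); rewrite lee_fin; lra.
  have := key ((2 - y)/2)%R ltac:(lra) ltac:(lra); rewrite lee_fin; lra.
- by rewrite leey.
- by have := key (1/2)%R ltac:(lra) ltac:(lra).
Qed.


Lemma min_exists (f : nat -> nat) n : (0 < n)%N -> exists i, (i < n)%N /\ forall j, (j < n)%N -> (f i <= f j)%N.
Proof.
elim: n => [//|n IH] _.
case: n IH => [|n] IH; first by exists 0; split => // j; case: j.
have [i [hi hm]] := IH isT.
case: (leqP (f i) (f n.+1)) => hc.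
  by exists i; split => [|j hj]; [lia|case: (ltngtP j n.+1) => hj'; [apply: hm| lia | rewrite hj']].
exists n.+1; split => // j hj; case: (ltngtP j n.+1) => hj'; [|lia| by rewrite hj'].
have := hm j hj'; lia.
Qed.

Lemma avg_exists (f : nat -> nat) n : (0 < n)%N ->
  exists i, (i < n)%N /\ (f i * n <= \sum_(0 <= j < n.+1) f j)%N.
Proof.
move=> n0; have [i [hi hm]] := min_exists f n0.
exists i; split => //.
rewrite big_nat_recr //=.
apply: (@leq_trans (\sum_(0 <= j < n) f j)); last by apply: leq_addr.
rewrite (_ : (f i * n = \sum_(0 <= j < n) f i)%N); last by rewrite sum_nat_const_nat subn0 mulnC.
rewrite big_nat_cond [X in (_ <= X)%N]big_nat_cond; apply: leq_sum => j /andP [/andP [_ hj] _].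
exact: hm.
Qed.

Lemma infix_drop (v : seq bool) d : infix (drop d v) v.
Proof. by apply/infixP; exists (take d v), [::]; rewrite cats0 cat_take_drop. Qed.

Lemma nth_form_false (V : seq bool) t q : (t < q)%N -> (q <= size (V ++ false :: nseq t true))%N ->
  nth false (drop (size (V ++ false :: nseq t true) - q) (V ++ false :: nseq t true)) (q - 1 - t) = false.
Proof.
move=> h1 h2; rewrite nth_drop.
have -> : (size (V ++ false :: nseq t true) - q + (q - 1 - t) = size V)%N.
  move: h2; rewrite size_cat /= size_nseq; lia.
by rewrite nth_cat ltnn subnn.
Qed.

Lemma nth_form_true (V : seq bool) t t' q : (t < t')%N -> (t < q)%N -> (q <= size (V ++ false :: nseq t' true))%N ->
  nth false (drop (size (V ++ false :: nseq t' true) - q) (V ++ false :: nseq t' true)) (q - 1 - t) = true.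
Proof.
move=> h0 h1 h2; rewrite nth_drop.
have -> : (size (V ++ false :: nseq t' true) - q + (q - 1 - t) = size V + (t' - t))%N.
  move: h2; rewrite size_cat /= size_nseq; lia.
rewrite nth_cat ltnNge leq_addr /= addKn.
have -> : (t' - t = (t' - t - 1).+1)%N by lia.
by rewrite /= nth_nseq; case: ifP => //; lia.
Qed.

Lemma itrans (a b c : seq bool) : infix a b -> infix b c -> infix a c.
Proof. move=> h1 h2; exact: infix_trans h1 h2. Qed.

Section Main.
Variables (r : nat -> nat) (s : nat -> nat -> nat) (N : nat).
Hypothesis hr : forall n, (1 <= n)%N -> (0 < r n)%N.
Hypothesis hN : forall n, (N <= n)%N -> s n (r n) = 0%N.
Local Notation W := (Bword r s).

Lemma gap_false k L i : (N <= k)%N -> (k < L)%N -> (i < r L)%N ->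
  infix (W k ++ nseq (s L i) true ++ [:: false]) (W L).
Proof.
case: L => [//|L] hk hkL hi.
have [P EP] := W_suffix hN hk (ltac:(lia) : (k <= L)%N).
have [t Et] := W_head r s L.
apply: itrans (W_pair s hi).
apply/infixP; exists P, t.
by rewrite {1}EP Et -!catA.
Qed.

Lemma gap_true k L i g : (N <= k)%N -> (k < L)%N -> (i < r L)%N -> (g < s L i)%N ->
  infix (W k ++ nseq g true ++ [:: true]) (W L).
Proof.
case: L => [//|L] hk hkL hi hg.
have [P EP] := W_suffix hN hk (ltac:(lia) : (k <= L)%N).
apply: itrans (W_pair s hi).
have -> : s L.+1 i = (g + 1 + (s L.+1 i - g - 1))%N by lia.
apply/infixP; exists P, (nseq (s L.+1 i - g - 1) true ++ W L).
by rewrite {1}EP !nseqD -!catA.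
Qed.

Variable X : set (int -> bool).
Hypothesis hocc : forall m w, (N <= m)%N -> infix w (W m) -> occurs_in X w.

Lemma chain_RS k g q : (N <= k)%N ->
  (exists L i, [/\ (k < L)%N, (i < r L)%N & s L i = g]) ->
  (exists L i, [/\ (k < L)%N, (i < r L)%N & (g < s L i)%N]) ->
  (q <= size (W k ++ nseq g true))%N ->
  RSw X (drop (size (W k ++ nseq g true) - q) (W k ++ nseq g true)).
Proof.
move=> hk [L [i [hL hi hg]]] [L' [i' [hL' hi' hg']]] hq.
split; rewrite -drop_rcons; try lia.
- apply: (hocc (m := L)); first lia.
  apply: itrans (infix_drop _ _) _.
  have := gap_false hk hL hi; rewrite hg -cats1 -?catA; exact.
- apply: (hocc (m := L')); first lia.
  apply: itrans (infix_drop _ _) _.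
  have := gap_true hk hL' hi' hg'; rewrite -cats1 -?catA; exact.
Qed.

Lemma ones_RS q : (forall j n, exists L i, [/\ (n <= L)%N, (i < r L)%N & (j <= s L i)%N]) ->
  RSw X (nseq q true).
Proof.
move=> hA; have [L [i [hL hi hj]]] := hA q.+1 N.+1.
split.
- apply: (hocc (m := L)); first lia.
  apply: itrans (gap_false (leqnn N) hL hi).
  have -> : s L i = (s L i - q + q)%N by lia.
  apply/infixP; exists (W N ++ nseq (s L i - q) true), [::].
  by rewrite cats0 nseqD -cats1 -?catA.
- apply: (hocc (m := L)); first lia.
  apply: itrans (gap_true (leqnn N) hL hi (ltac:(lia) : (q < s L i)%N)).
  apply/infixP; exists (W N), [::].
  by rewrite cats0 -cats1 -?catA.
Qed.

End Main.


Lemma occ_of_D (r : nat -> nat) (s : nat -> nat -> nat) (hr : forall n, (1 <= n)%N -> (0 < r n)%N)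
  (D : nat -> seq bool) (N0 : nat) :
  (forall m, (N0 <= m)%N -> exists P S, D m.+1 = P ++ D m ++ S /\ size P = (size (Bword r s m.+1) - size (Bword r s m))%N) ->
  (forall m, (N0 <= m)%N -> exists L, infix (D m) (Bword r s L)) ->
  (forall m, exists T, D m = Bword r s m ++ T) ->
  (forall m, (size (Bword r s m) + m < size (D m))%N) ->
  forall m w, (N0 <= m)%N -> infix w (Bword r s m) -> occurs_in (rank_one_subshift r s) w.
Proof.
move=> Dstep Dlegal Dpre Dsize m w hm hw.
exists (xpt r s D N0); split.
  exact: (xpt_in hr Dstep Dlegal Dsize).
exact: (xpt_occ hr Dstep Dpre Dsize hm hw).
Qed.

Lemma trailJ (r : nat -> nat) (s : nat -> nat -> nat) N :
  (forall n, (N <= n)%N -> s n (r n) = 0%N) ->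
  exists J, forall k, (N <= k)%N -> exists V, Bword r s k = V ++ false :: nseq J true.
Proof.
move=> hN; have [V0 [J E0]] := trail_form (W_head r s N).
exists J => k hk; have [P EP] := W_suffix hN (leqnn N) hk.
by exists (P ++ V0); rewrite EP E0 catA.
Qed.

Lemma u_form (u : seq bool) V J g : u = V ++ false :: nseq J true ->
  u ++ nseq g true = V ++ false :: nseq (J + g) true.
Proof. by move=> ->; rewrite -catA /= nseqD. Qed.

Theorem caseA (R : realType) (r : nat -> nat) (s : nat -> nat -> nat) N :
  (forall n, (1 <= n)%N -> (0 < r n)%N) ->
  finite_measure R r s ->
  (forall n, (N <= n)%N -> s n (r n) = 0%N) ->
  (forall j n, exists L i, [/\ (n <= L)%N, (i < r L)%N & (j <= s L i)%N]) ->
  ((2%:R : R)%:E <= limn_esup (fun q : nat => ((complexity r s q)%:R / q%:R : R)%:E))%E.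
Proof.
move=> hr hfm hN hA.
set X := rank_one_subshift r s.
have [J HJ] := trailJ hN.
pose D m := Bword r s m ++ nseq m.+1 true.
have hocc : forall m w, (N <= m)%N -> infix w (Bword r s m) -> occurs_in X w.
  apply: (occ_of_D hr (D := D)).
  - move=> m hm; have [P EP] := W_suffix hN hm (leqnSn m).
    exists P, [:: true]; split.
      by rewrite /D EP -(rcons_nseq true m.+1) -cats1 -!catA.
    by rewrite EP size_cat addnK.
  - move=> m hm; have [L [i [hL hi hg]]] := hA m.+1 m.+1.
    exists L; apply: itrans (gap_false hN hm hL hi).
    have -> : s L i = (m.+1 + (s L i - m.+1))%N by lia.
    apply/infixP; exists [::], (nseq (s L i - m.+1) true ++ [:: false]).
    by rewrite /D nseqD -!catA.
  - by move=> m; exists (nseq m.+1 true).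
  - move=> m; rewrite /D size_cat size_nseq; lia.
apply: limsup_ge2 => e e0 e1 K.
have e4 : (0 < e / 4 :> R)%R by lra.
have [K1 _ HK1] := cvgr0_norm_le _ (cvg_series_cvg_0 hfm) _ e4.
set M := Num.Def.archi_bound ((4 + 4 * J%:R) / e : R)%R.
have hM : ((4 + 4 * J%:R) / e < M%:R :> R)%R.
  have J0 : (0 <= J%:R :> R)%R := ler0n _ _.
  by apply: archi_boundP; apply: divr_ge0; lra.
set k := maxn (maxn N K) (maxn K1 M).
have hkN : (N <= k)%N by lia.
have [i [hi hg]] := avg_exists (s k.+1) (hr k.+1 isT).
set g := s k.+1 i.
set h := size (Bword r s k).
have hkh : (k < h)%N := W_size s hr k.
have hcount : (2 * (h.+1 - (J + g).+1) <= cplx X h.+1)%N.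
  apply: cplx_range => q /andP [q1 q2].
  have [V EV] := HJ k hkN.
  set u := Bword r s k ++ nseq g true.
  have Eu : u = V ++ false :: nseq (J + g) true by apply: u_form.
  have szu : size u = (h + g)%N by rewrite size_cat size_nseq.
  exists (drop (size u - q) u), (nseq q true); split.
  - by rewrite size_drop; apply/eqP; lia.
  - by rewrite size_nseq.
  - apply/eqP => E.
    have := nth_form_false (V := V) (t := J + g) (q := q) (ltac:(lia)) (ltac:(rewrite -Eu; lia)).
    by rewrite -Eu E nth_nseq; case: ifP => //; lia.
  - apply: (chain_RS hN hocc hkN).
    + by exists k.+1, i; split.
    + have [L [i' [hL hi' hg']]] := hA g.+1 k.+1.
      by exists L, i'; split.
    + by rewrite -/u szu; lia.
  - exact: (ones_RS hN hocc).
exists h.+1; split; first lia.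
have HK := HK1 k (ltac:(rewrite /=; lia)).
move: HK; rewrite /= /height /= ger0_norm; last first.
  by apply: divr_ge0; rewrite ?mulr_ge0 ?ler0n.
have hr0 : (0 < (r k.+1)%:R :> R)%R by rewrite ltr0n; apply: hr.
have hh0 : (0 < h%:R :> R)%R by rewrite ltr0n; lia.
rewrite ler_pdivrMr; last by apply: mulr_gt0.
move=> hsp.
have hg' : ((g * r k.+1)%:R <= (spacers r s k.+1)%:R :> R)%R by rewrite ler_nat.
rewrite natrM in hg'.
have hgR : (g%:R <= e / 4 * h%:R :> R)%R by nra.
have hkM : (M <= h)%N by lia.
have hMR : (M%:R <= h%:R :> R)%R by rewrite ler_nat.
have hJR : (4 + 4 * J%:R < e * h%:R :> R)%R.
  have := lt_le_trans hM hMR; rewrite ltr_pdivrMr //; lra.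
have hJg : (J + g <= h)%N.
  rewrite -(ler_nat R) natrD; nra.
have hc : ((2 * (h.+1 - (J + g).+1))%:R <= (cplx X h.+1)%:R :> R)%R by rewrite ler_nat.
rewrite natrM subSS natrB // natrD in hc.
rewrite /complexity -/X -[#|_|]/(cplx X h.+1).
rewrite -addn1 natrD; nra.
Qed.


Lemma gap_pair (r : nat -> nat) (s : nat -> nat -> nat) N :
  (forall n, (N <= n)%N -> s n (r n) = 0%N) ->
  forall k L i, (N <= k)%N -> (k < L)%N -> (i < r L)%N ->
  infix (Bword r s k ++ nseq (s L i) true ++ Bword r s k) (Bword r s L).
Proof.
move=> hN k [//|L] i hk hkL hi.
have [P EP] := W_suffix hN hk (ltac:(lia) : (k <= L)%N).
have [S ES] := W_prefix r s (ltac:(lia) : (k <= L)%N).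
apply: itrans (W_pair s hi).
apply/infixP; exists P, S.
by rewrite {1}EP ES -!catA.
Qed.

Definition infv (r : nat -> nat) (s : nat -> nat -> nat) v :=
  forall k, exists L i, [/\ (k <= L)%N, (i < r L)%N & s L i = v].

Theorem caseB (R : realType) (r : nat -> nat) (s : nat -> nat -> nat) N a b c :
  (forall n, (1 <= n)%N -> (0 < r n)%N) ->
  (forall n, (N <= n)%N -> s n (r n) = 0%N) ->
  (a < b)%N -> (b < c)%N -> infv r s a -> infv r s b -> infv r s c ->
  ((2%:R : R)%:E <= limn_esup (fun q : nat => ((complexity r s q)%:R / q%:R : R)%:E))%E.
Proof.
move=> hr hN hab hbc ia ib ic.
set X := rank_one_subshift r s.
have [J HJ] := trailJ hN.
pose D m := Bword r s m ++ nseq a true ++ Bword r s m.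
have hocc : forall m w, (N <= m)%N -> infix w (Bword r s m) -> occurs_in X w.
  apply: (occ_of_D hr (D := D)).
  - move=> m hm; have [P EP] := W_suffix hN hm (leqnSn m).
    have [S ES] := W_prefix r s (leqnSn m).
    exists P, S; split.
      by rewrite /D {1}EP ES -!catA.
    by rewrite EP size_cat addnK.
  - move=> m hm; have [L [i [hL hi hg]]] := ia m.+1.
    exists L; have := gap_pair hN hm hL hi; by rewrite hg.
  - by move=> m; exists (nseq a true ++ Bword r s m).
  - move=> m; have := W_size s hr m; rewrite /D !size_cat size_nseq; lia.
have gapk : forall k v, infv r s v -> exists L i, [/\ (k < L)%N, (i < r L)%N & s L i = v].
  by move=> k v iv; have [L [i [hL hi hg]]] := iv k.+1; exists L, i; split.
have gapgt : forall k v w, infv r s w -> (v < w)%N -> exists L i, [/\ (k < L)%N, (i < r L)%N & (v < s L i)%N].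
  by move=> k v w iw hvw; have [L [i [hL hi hg]]] := iw k.+1; exists L, i; split => //; rewrite hg.
apply: limsup_ge2 => e e0 e1 K.
set C := (J + a).+1.
have C0 : (0 <= C%:R :> R)%R := ler0n _ _.
set M := Num.Def.archi_bound (2 * C%:R / e : R)%R.
have hM : (2 * C%:R / e < M%:R :> R)%R.
  by apply: archi_boundP; apply: divr_ge0; lra.
set k := maxn (maxn N K) M.
have hkN : (N <= k)%N by lia.
set h := size (Bword r s k).
have hkh : (k < h)%N := W_size s hr k.
have hcount : (2 * (h.+1 - C) <= cplx X h.+1)%N.
  apply: cplx_range => q /andP [q1 q2].
  have [V EV] := HJ k hkN.
  set u1 := Bword r s k ++ nseq a true.
  set u2 := Bword r s k ++ nseq b true.
  have Eu1 : u1 = V ++ false :: nseq (J + a) true by apply: u_form.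
  have Eu2 : u2 = V ++ false :: nseq (J + b) true by apply: u_form.
  have szu1 : size u1 = (h + a)%N by rewrite size_cat size_nseq.
  have szu2 : size u2 = (h + b)%N by rewrite size_cat size_nseq.
  exists (drop (size u1 - q) u1), (drop (size u2 - q) u2); split.
  - by rewrite size_drop; apply/eqP; lia.
  - by rewrite size_drop; apply/eqP; lia.
  - apply/eqP => E.
    have := nth_form_false (V := V) (t := J + a) (q := q) (ltac:(lia)) (ltac:(rewrite -Eu1; lia)).
    have := nth_form_true (V := V) (t := J + a) (t' := J + b) (q := q) (ltac:(lia)) (ltac:(lia)) (ltac:(rewrite -Eu2; lia)).
    by rewrite -Eu1 -Eu2 E => ->.
  - apply: (chain_RS hN hocc hkN (gapk k a ia) (gapgt k a c ic (ltac:(lia)))).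
    by rewrite -/u1 szu1; lia.
  - apply: (chain_RS hN hocc hkN (gapk k b ib) (gapgt k b c ic hbc)).
    by rewrite -/u2 szu2; lia.
exists h.+1; split; first lia.
have hkM : (M <= h)%N by lia.
have hMR : (M%:R <= h%:R :> R)%R by rewrite ler_nat.
have hCR : (2 * C%:R < e * (h%:R + 1) :> R)%R.
  have := lt_le_trans hM hMR; rewrite ltr_pdivrMr //; nra.
have hCh : (C <= h.+1)%N.
  rewrite -(ler_nat R) -addn1 natrD; nra.
have hc : ((2 * (h.+1 - C))%:R <= (cplx X h.+1)%:R :> R)%R by rewrite ler_nat.
rewrite natrM natrB // -addn1 natrD in hc.
rewrite /complexity -/X -[#|_|]/(cplx X h.+1).
rewrite -addn1 natrD; nra.
Qed.

Unset Implicit Arguments.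

Theorem proposition2p5 (R : realType) (r : nat -> nat) (s : nat -> nat -> nat) :
  (forall n, (1 <= n)%N -> (0 < r n)%N) ->
  finite_measure R r s ->
  (exists N, forall n, (N <= n)%N -> s n (r n) = 0%N) ->
  (forall N, exists n, [/\ (N <= n)%N, (1 <= n)%N &
     exists a b c : nat, [/\ a <> b, b <> c, a <> c &
       forall v, v \in [:: a; b; c] ->
         exists m i, [/\ (n <= m)%N, (i < r m)%N & s m i = v]]]) ->
  ((2%:R : R)%:E <= limn_esup (fun q : nat => ((complexity r s q)%:R / q%:R : R)%:E))%E.
Proof.
move=> hr hfm [N hN] h3.
case: (pselect (forall j n, exists L i, [/\ (n <= L)%N, (i < r L)%N & (j <= s L i)%N])) => hA.
  exact: caseA hr hfm hN hA.
have [j0 [n0 hj0]] : exists j0 n0, forall L i, (n0 <= L)%N -> (i < r L)%N -> (s L i < j0)%N.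
  apply: contrapT => Hne; apply: hA => j n; apply: contrapT => hn; apply: Hne; exists j, n => L i hL hi.
  rewrite ltnNge; apply/negP => hge; apply: hn; by exists L, i; split.
have boundK : forall n, exists K, forall v, (v < n)%N ->
    infv r s v \/ (forall L i, (K <= L)%N -> (i < r L)%N -> s L i <> v).
  elim => [|n [K HK]]; first by exists 0.
  case: (pselect (infv r s n)) => hn.
    exists K => v hv; case: (ltngtP v n) => hvn; [exact: HK| lia | left; by rewrite hvn].
  have [k hk] : exists k, forall L i, (k <= L)%N -> (i < r L)%N -> s L i <> n.
    apply: contrapT => H; apply: hn => k; apply: contrapT => H2; apply: H; exists k => L i hL hi E.
    by apply: H2; exists L, i; split.
  exists (maxn K k) => v hv; case: (ltngtP v n) => hvn; [|lia|].
    case: (HK v hvn) => [?|H]; [by left|right => L i hL hi; apply: H => //; lia].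
  right => L i hL hi; rewrite hvn; apply: hk => //; lia.
have [K HK] := boundK j0.
have [n [hn _ [a [b [c [hab hbc hac hv]]]]]] := h3 (maxn K n0).
have inf_of : forall v, v \in [:: a; b; c] -> infv r s v.
  move=> v vin; have [m [i [hm hi hsv]]] := hv v vin.
  have vj : (v < j0)%N by rewrite -hsv; apply: hj0 => //; lia.
  case: (HK v vj) => // H; exfalso; exact: (H m i (ltac:(lia)) hi hsv).
have ia := inf_of a (ltac:(by rewrite !inE eqxx)).
have ib := inf_of b (ltac:(by rewrite !inE eqxx orbT)).
have ic := inf_of c (ltac:(by rewrite !inE eqxx !orbT)).
have o : ((a < b)%N /\ (b < c)%N) \/ ((a < c)%N /\ (c < b)%N) \/ ((b < a)%N /\ (a < c)%N) \/
         ((b < c)%N /\ (c < a)%N) \/ ((c < a)%N /\ (a < b)%N) \/ ((c < b)%N /\ (b < a)%N) by lia.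
case: o => [[h1 h2]|[[h1 h2]|[[h1 h2]|[[h1 h2]|[[h1 h2]|[h1 h2]]]]]].
- exact: (caseB R hr hN h1 h2 ia ib ic).
- exact: (caseB R hr hN h1 h2 ia ic ib).
- exact: (caseB R hr hN h1 h2 ib ia ic).
- exact: (caseB R hr hN h1 h2 ib ic ia).
- exact: (caseB R hr hN h1 h2 ic ia ib).
- exact: (caseB R hr hN h1 h2 ic ib ia).
Qed.
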